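(* Let $O$ be a unitary operator and $P$ a self-adjoint orthogonal projection on a finite-dimensional Hilbert space such that $(\mathrm{Id}-P)O=\mathrm{Id}-P$. Then for any vector $\varphi$ and any density matrix $\sigma$, $$\left|\langle\varphi,(O\sigma O^\dagger-\sigma)\varphi\rangle\right|\leq 2\lVert P\varphi\rVert\,\lVert\varphi\rVert\left(\mathrm{tr}\bigl((O\sigma O^\dagger-\sigma)^2\bigr)\right)^{1/2}.$$ *)

(* Defs.v *)
From HB Require Import structures.
From mathcomp Require Import all_boot all_order all_algebra.
Set Implicit Arguments. Unset Strict Implicit. Unset Printing Implicit Defensive.
Import Order.TTheory GRing.Theory Num.Theory.
Local Open Scope ring_scope.

(* Finite-dimensional complex Hilbert space C^n, C a numClosedFieldType
   (e.g. algC or complex R), standard inner product <x,y> = x^* y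
   (antilinear in the first argument). *)

Definition adjmx (C : numClosedFieldType) m n (A : 'M[C]_(m, n)) : 'M[C]_(n, m) :=
  (map_mx Num.conj A)^T.

Definition inner (C : numClosedFieldType) n (x y : 'cV[C]_n) : C :=
  (adjmx x *m y) 0 0.

Definition vnorm (C : numClosedFieldType) n (x : 'cV[C]_n) : C :=
  sqrtC (inner x x).

Definition unitary (C : numClosedFieldType) n (O : 'M[C]_n) : Prop :=
  O *m adjmx O = 1%:M /\ adjmx O *m O = 1%:M.

Definition sa_projection (C : numClosedFieldType) n (P : 'M[C]_n) : Prop :=
  P *m P = P /\ adjmx P = P.

Definition density_matrix (C : numClosedFieldType) n (s : 'M[C]_n) : Prop :=
  [/\ adjmx s = s, (forall v : 'cV[C]_n, 0 <= inner v (s *m v)) & \tr s = 1].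

(* Main.v *)
Require Import Defs.
From HB Require Import structures.
From mathcomp Require Import all_boot all_order all_algebra.
From mathcomp Require Import ring.
Import Order.TTheory GRing.Theory Num.Theory.
Local Open Scope ring_scope.

Section S.
Variable C : numClosedFieldType.

Lemma cs_real n (a b : 'I_n -> C) : (forall i, 0 <= a i) -> (forall i, 0 <= b i) ->
  (\sum_i a i * b i) ^+ 2 <= (\sum_i a i ^+ 2) * (\sum_i b i ^+ 2).
Proof.
move=> a0 b0.
have S1 : \sum_i \sum_j a i ^+ 2 * b j ^+ 2 = (\sum_i a i ^+ 2) * (\sum_i b i ^+ 2).
  by rewrite big_distrl /=; apply: eq_bigr => i _; rewrite big_distrr.
have S2 : \sum_i \sum_j a j ^+ 2 * b i ^+ 2 = (\sum_i a i ^+ 2) * (\sum_i b i ^+ 2).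
  by rewrite exchange_big.
have S3 : \sum_i \sum_j (a i * b i) * (a j * b j) = (\sum_i a i * b i) ^+ 2.
  by rewrite expr2 big_distrl /=; apply: eq_bigr => i _; rewrite big_distrr.
have key : (\sum_i \sum_j (a i * b j - a j * b i) ^+ 2) =
   2 * ((\sum_i a i ^+ 2) * (\sum_i b i ^+ 2) - (\sum_i a i * b i) ^+ 2).
  transitivity (\sum_i \sum_j a i ^+ 2 * b j ^+ 2 + \sum_i \sum_j a j ^+ 2 * b i ^+ 2
     - 2 * \sum_i \sum_j (a i * b i) * (a j * b j)).
    rewrite mulr_sumr -big_split -sumrB; apply: eq_bigr => i _ /=.
    rewrite mulr_sumr -big_split -sumrB; apply: eq_bigr => j _ /=.
    ring.
  rewrite S1 S2 S3; ring.
have : 0 <= \sum_i \sum_j (a i * b j - a j * b i) ^+ 2.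
  apply: sumr_ge0 => i _; apply: sumr_ge0 => j _.
  rewrite -real_normK ?exprn_ge0 //.
  by apply: rpredB; apply: rpredM; apply: ger0_real.
by rewrite key pmulr_rge0 // subr_ge0.
Qed.

Lemma cs_cplx n (f g : 'I_n -> C) :
  `|\sum_i (f i)^* * g i| ^+ 2 <= (\sum_i `|f i| ^+ 2) * (\sum_i `|g i| ^+ 2).
Proof.
have := @cs_real n (fun i => `|f i|) (fun i => `|g i|) (fun i => normr_ge0 (f i)) (fun i => normr_ge0 (g i)).
apply: le_trans.
rewrite ler_pXn2r ?nnegrE ?sumr_ge0 //.
  have -> : \sum_i `|f i| * `|g i| = \sum_i `|(f i)^* * g i|.
    by apply: eq_bigr => i _; rewrite normrM norm_conjC.
  exact: ler_norm_sum.
by move=> i _; rewrite mulr_ge0.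
Qed.

Lemma inner_sum n (x y : 'cV[C]_n) : inner x y = \sum_i (x i 0)^* * y i 0.
Proof. by rewrite /inner /adjmx !mxE; apply: eq_bigr => i _; rewrite !mxE. Qed.

Lemma inner_self n (x : 'cV[C]_n) : inner x x = \sum_i `|x i 0| ^+ 2.
Proof. by rewrite inner_sum; apply: eq_bigr => i _; rewrite normCK mulrC. Qed.

Lemma inner_ge0 n (x : 'cV[C]_n) : 0 <= inner x x.
Proof. by rewrite inner_self; apply: sumr_ge0 => i _; rewrite exprn_ge0. Qed.

Lemma vnorm_ge0 n (x : 'cV[C]_n) : 0 <= vnorm x.
Proof. by rewrite /vnorm sqrtC_ge0 inner_ge0. Qed.

Lemma inner_cs n (x y : 'cV[C]_n) : `|inner x y| <= vnorm x * vnorm y.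
Proof.
rewrite /vnorm -sqrtCM ?nnegrE ?inner_ge0 // -(sqrCK (normr_ge0 _)).
rewrite ler_sqrtC ?nnegrE ?exprn_ge0 ?mulr_ge0 ?inner_ge0 //.
by rewrite !inner_self inner_sum cs_cplx.
Qed.

Lemma hs_bound n (A : 'M[C]_n) (x : 'cV[C]_n) :
  vnorm (A *m x) <= sqrtC (\tr (adjmx A *m A)) * vnorm x.
Proof.
have trE : \tr (adjmx A *m A) = \sum_i \sum_j `|A i j| ^+ 2.
  rewrite /mxtrace exchange_big; apply: eq_bigr => k _.
  rewrite !mxE; apply: eq_bigr => i _; rewrite /adjmx !mxE normCK mulrC //.
have tr0 : 0 <= \tr (adjmx A *m A) 
  by rewrite trE; apply: sumr_ge0 => i _; apply: sumr_ge0 => j _; apply: exprn_ge0.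
rewrite /vnorm -sqrtCM ?nnegrE ?inner_ge0 //.
rewrite ler_sqrtC ?nnegrE ?mulr_ge0 ?inner_ge0 //.
rewrite inner_self trE big_distrl /=.
apply: ler_sum => i _.
have := @cs_cplx n (fun j => (A i j)^*) (fun j => x j 0).
rewrite -inner_self !mxE.
have -> : \sum_j (A i j)^*^* * x j 0 = \sum_j A i j * x j 0.
  by apply: eq_bigr => j _; rewrite conjCK.
have -> : \sum_j `|(A i j)^*| ^+ 2 = \sum_j `|A i j| ^+ 2.
  by apply: eq_bigr => j _; rewrite norm_conjC.
done.
Qed.

Lemma adjmxM m n p (A : 'M[C]_(m, n)) (B : 'M[C]_(n, p)) :
  adjmx (A *m B) = adjmx B *m adjmx A.
Proof. by rewrite /adjmx map_mxM trmx_mul. Qed.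

Lemma adjmxK m n (A : 'M[C]_(m, n)) : adjmx (adjmx A) = A.
Proof. by apply/matrixP => i j; rewrite !mxE conjCK. Qed.

Lemma adjmxB m n (A B : 'M[C]_(m, n)) : adjmx (A - B) = adjmx A - adjmx B.
Proof. by apply/matrixP => i j; rewrite !mxE rmorphB. Qed.

Lemma adjmxD m n (A B : 'M[C]_(m, n)) : adjmx (A + B) = adjmx A + adjmx B.
Proof. by apply/matrixP => i j; rewrite !mxE rmorphD. Qed.

Lemma adjmx1 n : adjmx (1%:M : 'M[C]_n) = 1%:M.
Proof. by apply/matrixP => i j; rewrite !mxE eq_sym; case: eqP; rewrite ?rmorph1 ?rmorph0. Qed.

Lemma inner_adj n (A : 'M[C]_n) (x y : 'cV[C]_n) :
  inner (A *m x) y = inner x (adjmx A *m y).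
Proof. by rewrite /inner adjmxM mulmxA. Qed.

Lemma innerDl n (x y z : 'cV[C]_n) : inner (x + y) z = inner x z + inner y z.
Proof. by rewrite /inner adjmxD mulmxDl mxE. Qed.

Lemma innerDr n (x y z : 'cV[C]_n) : inner x (y + z) = inner x y + inner x z.
Proof. by rewrite /inner mulmxDr mxE. Qed.

Lemma inner0r n (x : 'cV[C]_n) : inner x 0 = 0.
Proof. by rewrite /inner mulmx0 mxE. Qed.

Lemma QDQ_gen n (Q O s : 'M[C]_n) : Q *m O = Q -> adjmx O *m Q = Q ->
  Q *m (O *m s *m adjmx O - s) *m Q = 0.
Proof.
move=> QO OQ.
by rewrite mulmxBr mulmxBl !mulmxA QO -!mulmxA OQ subrr.
Qed.
End S.

Theorem lemma3 (C : numClosedFieldType) (n : nat) (O P sigma : 'M[C]_n)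
  (phi : 'cV[C]_n) :
  unitary O -> sa_projection P -> (1%:M - P) *m O = 1%:M - P ->
  density_matrix sigma ->
  `| inner phi ((O *m sigma *m adjmx O - sigma) *m phi) |
    <= 2 * vnorm (P *m phi) * vnorm phi
         * sqrtC (\tr ((O *m sigma *m adjmx O - sigma) *m
                       (O *m sigma *m adjmx O - sigma))).
Proof.
move=> [OU UO] [PP Pa] QO [sa _ _].
set Q := 1%:M - P in QO *.
set D := O *m sigma *m adjmx O - sigma.
have Qa : adjmx Q = Q by rewrite /Q adjmxB adjmx1 Pa.
have OQ : adjmx O *m Q = Q by rewrite -{1}Qa -adjmxM QO.
have QQ : Q *m Q = Q by rewrite /Q mulmxBl mul1mx mulmxBr mulmx1 PP subrr subr0.
have QDQ : Q *m D *m Q = 0.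
  exact: QDQ_gen.
have Da : adjmx D = D by rewrite /D adjmxB !adjmxM adjmxK sa mulmxA.
set p := P *m phi. set q := Q *m phi.
have phiE : phi = p + q by rewrite /p /q -mulmxDl /Q addrC subrK mul1mx.
have key : inner phi (D *m phi) = inner p (D *m phi) + inner q (D *m p).
  rewrite {1}phiE innerDl; congr (_ + _).
  rewrite {1}phiE mulmxDr innerDr.
  have -> : inner q (D *m q) = 0.
    by rewrite /q inner_adj Qa !mulmxA QDQ mul0mx inner0r.
  by rewrite addr0.
have qle : vnorm q <= vnorm phi.
  have e : inner phi phi = inner p p + inner q q.
    rewrite /p /q !inner_adj Pa Qa !mulmxA PP QQ -innerDr -mulmxDl /Q addrC subrK.
    by rewrite mul1mx.
  rewrite /vnorm ler_sqrtC ?nnegrE ?inner_ge0 // e lerDr inner_ge0 //.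
set H := sqrtC _.
have HE : H = sqrtC (\tr (adjmx D *m D)) by rewrite Da.
rewrite key; apply: (le_trans (ler_normD _ _)).
have b1 : `|inner p (D *m phi)| <= vnorm p * (H * vnorm phi).
  apply: (le_trans (inner_cs _ _ _ _)).
  by apply: ler_wpM2l; [apply: vnorm_ge0 | rewrite HE hs_bound].
have b2 : `|inner q (D *m p)| <= vnorm phi * (H * vnorm p).
  apply: (le_trans (inner_cs _ _ _ _)).
  apply: ler_pM; rewrite ?vnorm_ge0 //. 
  by rewrite HE hs_bound.
apply: (le_trans (lerD b1 b2)).
rewrite le_eqVlt; apply/orP; left; apply/eqP; ring.
Qed.
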